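(* Let $\alpha \in \mathbb{R}_{>0}$ and $M_\alpha = \{f(\alpha) \mid f(x) \in \mathbb{N}_0[x,x^{-1}]\}$ as an additive monoid. The following are equivalent: (a) $M_\alpha$ is an FFM; (b) $M_\alpha$ is a BFM; (c) $M_\alpha$ satisfies the ACCP.
   Context: $\mathbb{N}_0[x,x^{-1}]$ denotes the semiring of Laurent polynomials with coefficients in $\mathbb{N}_0$. For an atomic reduced additive monoid $M$ and nonzero $x \in M$, $\mathsf{Z}(x)$ is the set of factorizations of $x$ (formal sums of atoms, up to order, adding to $x$) and $\mathsf{L}(x)$ the set of their lengths (number of atoms counted with repetition). $M$ is an FFM (finite factorization monoid) if it is atomic and $\mathsf{Z}(x)$ is finite for all nonzero $x$, and a BFM (bounded factorization monoid) if it is atomic and $\mathsf{L}(x)$ is finite for all nonzero $x$. $M$ satisfies the ACCP if every ascending chain of principal ideals $x_1 + M \subseteq x_2 + M \subseteq \cdots$ eventually stabilizes. *)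

(* Defs.v *)
From Stdlib Require Import Reals List Permutation.
Import ListNotations.
Open Scope R_scope.

(* A Laurent polynomial f with coefficients in N_0 is a finite sum of
   monomials c * x^k (c : nat, k : Z); we represent it by the list of its
   monomials (c, k).  Its evaluation at alpha: *)
Definition laurent_eval (f : list (nat * Z)) (alpha : R) : R :=
  fold_right (fun ck acc => INR (fst ck) * powerRZ alpha (snd ck) + acc) 0 f.

Definition M_alpha (alpha : R) (x : R) : Prop :=
  exists f : list (nat * Z), x = laurent_eval f alpha.

Section Monoid.
Variable M : R -> Prop.

Definition is_unit (u : R) : Prop := M u /\ exists v, M v /\ u + v = 0.

Definition is_atom (a : R) : Prop :=
  M a /\ ~ is_unit a /\
  forall b c, M b -> M c -> a = b + c -> is_unit b \/ is_unit c.

Definition sumR (l : list R) : R := fold_right Rplus 0 l.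

(* a factorization of x: a finite formal sum of atoms adding to x
   (lists, identified up to order via Permutation) *)
Definition is_factorization (x : R) (z : list R) : Prop :=
  Forall is_atom z /\ sumR z = x.

Definition nonzero_el (x : R) : Prop := M x /\ x <> 0.

Definition atomic : Prop :=
  forall x, nonzero_el x -> exists z, is_factorization x z.

Definition FFM : Prop :=
  atomic /\
  forall x, nonzero_el x ->
    exists F : list (list R),
      forall z, is_factorization x z -> exists z', In z' F /\ Permutation z z'.

(* L(x) finite (a set of naturals is finite iff bounded) *)
Definition BFM : Prop :=
  atomic /\
  forall x, nonzero_el x ->
    exists N : nat, forall z, is_factorization x z -> (length z <= N)%nat.

(* principal ideal inclusion  x + M ⊆ y + M *)
Definition pideal_incl (x y : R) : Prop :=
  forall m, M m -> exists m', M m' /\ x + m = y + m'.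

Definition ACCP : Prop :=
  forall s : nat -> R,
    (forall n, M (s n)) ->
    (forall n, pideal_incl (s n) (s (S n))) ->
    exists N, forall n, (N <= n)%nat ->
      pideal_incl (s n) (s N) /\ pideal_incl (s N) (s n).
End Monoid.

(* Main.v *)
Require Import Defs.
From Stdlib Require Import Reals List Permutation Lia Lra ZArith ClassicalEpsilon Classical FunctionalExtensionality PropExtensionality.
Import ListNotations.
Open Scope R_scope.

Lemma eval_nil a : laurent_eval [] a = 0.
Proof. reflexivity. Qed.
Lemma eval_cons a c k f : laurent_eval ((c,k)::f) a = INR c * powerRZ a k + laurent_eval f a.
Proof. reflexivity. Qed.
Lemma sumR_nil : sumR [] = 0.
Proof. reflexivity. Qed.
Lemma sumR_cons x l : sumR (x :: l) = x + sumR l.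
Proof. reflexivity. Qed.

Lemma le_eval_nonneg a (ha : 0 < a) f : 0 <= laurent_eval f a.
Proof.
  induction f as [|[c k] f IH]. rewrite eval_nil; lra.
  rewrite eval_cons.
  assert (0 <= INR c) by apply pos_INR.
  assert (0 < powerRZ a k) by (apply powerRZ_lt; lra).
  nra.
Qed.

Lemma M_nonneg a (ha : 0 < a) x : M_alpha a x -> 0 <= x.
Proof. intros [f ->]. apply le_eval_nonneg; auto. Qed.

Lemma M_zero a : M_alpha a 0.
Proof. exists []. reflexivity. Qed.

Lemma eval_app f g a : laurent_eval (f ++ g) a = laurent_eval f a + laurent_eval g a.
Proof. induction f as [|[c k] f IH]. rewrite app_nil_l, eval_nil; lra.
  rewrite <- app_comm_cons, !eval_cons, IH; lra. Qed.

Lemma M_add a x y : M_alpha a x -> M_alpha a y -> M_alpha a (x + y).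
Proof. intros [f ->] [g ->]. exists (f ++ g). now rewrite eval_app. Qed.

Lemma M_pow a k : M_alpha a (powerRZ a k).
Proof. exists [(1%nat, k)]. rewrite eval_cons, eval_nil. simpl. lra. Qed.

Lemma M_one a : M_alpha a 1.
Proof. exists [(1%nat, 0%Z)]. rewrite eval_cons, eval_nil. simpl. lra. Qed.

Lemma eval_shift a (ha: 0 < a) f j : powerRZ a j * laurent_eval f a = laurent_eval (map (fun ck => (fst ck, (j + snd ck)%Z)) f) a.
Proof.
  induction f as [|[c k] f IH]. simpl map; rewrite eval_nil; ring.
  simpl map. rewrite !eval_cons, <- IH. simpl. rewrite powerRZ_add by lra. ring.
Qed.

Lemma M_scale a (ha : 0 < a) j x : M_alpha a x -> M_alpha a (powerRZ a j * x).
Proof. intros [f ->]. eexists. apply eval_shift; auto. Qed.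

Lemma M_monomial a (ha: 0<a) x : M_alpha a x -> x <> 0 -> exists k, M_alpha a (x - powerRZ a k).
Proof.
  intros [f ->]. induction f as [|[c k] f IH]; intros Hne.
  - rewrite eval_nil in Hne. lra.
  - rewrite eval_cons in *. destruct c as [|c].
    + simpl INR in *. destruct IH as [k' Hk']. lra. exists k'.
      replace (0 * powerRZ a k + laurent_eval f a - powerRZ a k') with (laurent_eval f a - powerRZ a k') by ring. auto.
    + exists k. exists ((c,k)::f). rewrite eval_cons, S_INR. ring.
Qed.

Lemma unit_iff a (ha:0<a) u : is_unit (M_alpha a) u <-> M_alpha a u /\ u = 0.
Proof.
  split.
  - intros [Hu [v [Hv Huv]]]. split; auto. pose proof (M_nonneg a ha u Hu). pose proof (M_nonneg a ha v Hv). lra.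
  - intros [Hu ->]. split; auto. exists 0. split. apply M_zero. lra.
Qed.

Lemma atom_pos a (ha:0<a) x : is_atom (M_alpha a) x -> 0 < x.
Proof.
  intros [Hx [Hnu _]]. pose proof (M_nonneg a ha x Hx).
  destruct (Req_dec x 0). subst. exfalso; apply Hnu. apply unit_iff; auto. lra.
Qed.

Lemma atom_form a (ha:0<a) x : is_atom (M_alpha a) x -> exists k, x = powerRZ a k.
Proof.
  intros Hat. pose proof (atom_pos a ha x Hat) as Hp.
  destruct Hat as [Hx [Hnu Hirr]].
  destruct (M_monomial a ha x Hx) as [k Hk]; [lra|].
  exists k.
  destruct (Hirr (powerRZ a k) (x - powerRZ a k) (M_pow a k) Hk) as [H|H]; [ring| |].
  - apply unit_iff in H; auto. destruct H as [_ H]. pose proof (powerRZ_lt a k ha). lra.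
  - apply unit_iff in H; auto. lra.
Qed.

Lemma sumR_app l1 l2 : sumR (l1 ++ l2) = sumR l1 + sumR l2.
Proof. induction l1. rewrite app_nil_l, sumR_nil; lra. rewrite <- app_comm_cons, !sumR_cons, IHl1; lra. Qed.

Lemma sumR_perm l1 l2 : Permutation l1 l2 -> sumR l1 = sumR l2.
Proof. induction 1; rewrite ?sumR_cons; lra. Qed.

Lemma sumR_repeat p c : sumR (repeat p c) = INR c * p.
Proof. induction c. change (repeat p 0) with (@nil R); rewrite sumR_nil; simpl; lra. rewrite S_INR. change (repeat p (S c)) with (p :: repeat p c). rewrite sumR_cons, IHc. ring. Qed.

Lemma atoms_sum_M a l : Forall (is_atom (M_alpha a)) l -> M_alpha a (sumR l).
Proof. induction 1. apply M_zero. rewrite sumR_cons. apply M_add; auto. destruct H; auto. Qed.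

Lemma in_le_sum a (ha:0<a) l x : Forall (is_atom (M_alpha a)) l -> In x l -> x <= sumR l.
Proof.
  induction 1; intros Hin. contradiction. simpl In in Hin.
  rewrite sumR_cons. pose proof (atom_pos a ha x0 H).
  pose proof (M_nonneg a ha _ (atoms_sum_M a l H0)).
  destruct Hin as [->|Hin]. lra. specialize (IHForall Hin). lra.
Qed.

Lemma chain_not_ACCP a (ha:0<a) (Q : R -> Prop) y0 :
  Q y0 -> (forall y, Q y -> M_alpha a y) ->
  (forall y, Q y -> exists y', Q y' /\ M_alpha a (y - y') /\ y' < y) ->
  ~ ACCP (M_alpha a).
Proof.
  intros H0 HQM Hstep Hacc.
  set (f := fun y => epsilon (inhabits 0) (fun y' => Q y' /\ M_alpha a (y - y') /\ y' < y)).
  assert (Hf : forall y, Q y -> Q (f y) /\ M_alpha a (y - f y) /\ f y < y).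
  { intros y Hy. apply (epsilon_spec (inhabits 0) (fun y' => Q y' /\ M_alpha a (y - y') /\ y' < y)). apply Hstep; auto. }
  set (s := fun n => Nat.iter n f y0).
  assert (Hs : forall n, Q (s n)).
  { induction n; simpl. auto. apply Hf. apply IHn. }
  destruct (Hacc s) as [N HN].
  - intro n. apply HQM, Hs.
  - intros n m Hm. exists ((s n - s (S n)) + m). split.
    + apply M_add; auto. apply (Hf (s n) (Hs n)).
    + lra.
  - destruct (HN (S N) (Nat.le_succ_diag_r N)) as [H1 _].
    destruct (H1 0 (M_zero a)) as [m' [Hm' Heq]].
    pose proof (M_nonneg a ha m' Hm'). destruct (Hf (s N) (Hs N)) as [_ [_ Hlt]].
    change (s (S N)) with (f (s N)) in Heq. lra.
Qed.
Lemma one_atom a (ha:0<a) : ACCP (M_alpha a) -> is_atom (M_alpha a) 1.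
Proof.
  intros Hacc.
  split; [apply M_one|split].
  - intros Hu. apply unit_iff in Hu; auto. lra.
  - intros b c Hb Hc Hbc. apply NNPP. intros Hn.
    apply not_or_and in Hn. destruct Hn as [Hnb Hnc].
    assert (b <> 0) by (intro; apply Hnb; apply unit_iff; auto).
    assert (c <> 0) by (intro; apply Hnc; apply unit_iff; auto).
    pose proof (M_nonneg a ha b Hb). pose proof (M_nonneg a ha c Hc).
    apply (chain_not_ACCP a ha (fun y => M_alpha a y /\ 0 < y) 1); auto.
    + split; [apply M_one|lra].
    + intros y [Hy _]; auto.
    + intros y [Hy Hpos]. destruct (M_monomial a ha y Hy) as [k Hk]; [lra|].
      exists (powerRZ a k * b). pose proof (powerRZ_lt a k ha).
      pose proof (M_nonneg a ha _ Hk).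
      assert (E : powerRZ a k = powerRZ a k * b + powerRZ a k * c)
        by (rewrite <- Rmult_plus_distr_l, <- Hbc; ring).
      split; [split; [apply M_scale; auto| nra]|split].
      * replace (y - powerRZ a k * b) with ((y - powerRZ a k) + powerRZ a k * c) by lra.
        apply M_add; auto. apply M_scale; auto.
      * nra.
Qed.

Lemma pow_atom a (ha:0<a) k : is_atom (M_alpha a) 1 -> is_atom (M_alpha a) (powerRZ a k).
Proof.
  intros [_ [_ H1]]. pose proof (powerRZ_lt a k ha).
  pose proof (powerRZ_lt a (-k) ha).
  split; [apply M_pow|split].
  - intro Hu. apply unit_iff in Hu; auto. lra.
  - intros b c Hb Hc Hbc.
    destruct (H1 (powerRZ a (-k) * b) (powerRZ a (-k) * c)) as [Hu|Hu];
      try (apply M_scale; auto).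
    + rewrite <- Rmult_plus_distr_l, <- Hbc, <- powerRZ_add by lra. rewrite Z.add_opp_diag_l. reflexivity.
    + left. apply unit_iff in Hu; auto. apply unit_iff; auto. split; auto. destruct Hu as [_ Hu].
      apply Rmult_integral in Hu. destruct Hu; lra.
    + right. apply unit_iff in Hu; auto. apply unit_iff; auto. split; auto. destruct Hu as [_ Hu].
      apply Rmult_integral in Hu. destruct Hu; lra.
Qed.

Lemma atomic_M a (ha:0<a) : is_atom (M_alpha a) 1 -> atomic (M_alpha a).
Proof.
  intros H1 x [[f ->] _].
  induction f as [|[c k] f IH].
  - exists []. split; [constructor|reflexivity].
  - destruct IH as [z [Hz Hs]]. exists (repeat (powerRZ a k) c ++ z). split.
    + apply Forall_app; split; auto. apply Forall_forall. intros y Hy. apply repeat_spec in Hy. subst. apply pow_atom; auto.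
    + rewrite sumR_app, Hs, eval_cons, sumR_repeat. reflexivity.
Qed.

Lemma FFM_BFM M : FFM M -> BFM M.
Proof.
  intros [Hat Hfin]. split; auto. intros x Hx. destruct (Hfin x Hx) as [F HF].
  exists (fold_right (fun l n => Nat.max (length l) n) 0%nat F).
  intros z Hz. destruct (HF z Hz) as [z' [Hin Hp]]. rewrite (Permutation_length Hp).
  clear -Hin. induction F; simpl in *; [contradiction|]. destruct Hin; [subst; lia| specialize (IHF H); lia].
Qed.

Lemma nat_stab (c : nat -> nat) B : (forall n, (c n <= c (S n))%nat) -> (forall n, (c n <= B)%nat) ->
  exists N, forall n, (N <= n)%nat -> c n = c N.
Proof.
  intros Hmono Hb.
  assert (Hm : forall n m, (n <= m)%nat -> (c n <= c m)%nat).
  { intros n m H. induction H; auto. specialize (Hmono m). lia. }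
  assert (H : forall k N, (B - c N <= k)%nat -> exists N', forall n, (N' <= n)%nat -> c n = c N').
  { induction k; intros N HN.
    - exists N. intros n Hn. pose proof (Hm _ _ Hn). pose proof (Hb n). pose proof (Hb N). lia.
    - destruct (classic (exists n, (N <= n)%nat /\ c n <> c N)) as [[n [Hn Hne]]|Hno].
      + apply (IHk n). pose proof (Hm _ _ Hn). pose proof (Hb n). lia.
      + exists N. intros n Hn. apply NNPP. intro. apply Hno. eauto. }
  apply (H B 0%nat). lia.
Qed.

Fixpoint count (s : nat -> R) (n : nat) : nat :=
  match n with 0%nat => 0%nat | S n => (count s n + if Req_EM_T (s n - s (S n)) 0 then 0 else 1)%nat end.

Lemma BFM_ACCP a (ha:0<a) : BFM (M_alpha a) -> ACCP (M_alpha a).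
Proof.
  intros [Hat Hb] s HsM Hinc.
  assert (Ht : forall n, M_alpha a (s n - s (S n))).
  { intro n. destruct (Hinc n 0 (M_zero a)) as [m' [Hm' E]]. replace (s n - s (S n)) with m' by lra. auto. }
  assert (Hdec : forall n, s (S n) <= s n).
  { intro n. pose proof (M_nonneg a ha _ (Ht n)). lra. }
  assert (Hst : exists N, forall n, (N <= n)%nat -> s n = s N).
  { destruct (Req_dec (s 0%nat) 0) as [H0|H0].
    - exists 0%nat. intros n _. rewrite H0. induction n. auto.
      pose proof (Hdec n). pose proof (M_nonneg a ha _ (HsM (S n))). lra.
    - destruct (Hb (s 0%nat) (conj (HsM 0%nat) H0)) as [B HB].
      assert (Hcl : forall n, exists z, Forall (is_atom (M_alpha a)) z /\ sumR z = s 0%nat - s n /\ (count s n <= length z)%nat).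
      { induction n.
        - exists []. split; auto. split; [rewrite sumR_nil; lra| simpl; lia].
        - destruct IHn as [z [Hz1 [Hz2 Hz3]]]. simpl count.
          destruct (Req_EM_T (s n - s (S n)) 0) as [E|E].
          + exists z. split; auto. split; [lra|lia].
          + destruct (Hat (s n - s (S n)) (conj (Ht n) E)) as [w [Hw1 Hw2]].
            exists (z ++ w). split; [apply Forall_app; auto|]. split.
            * rewrite sumR_app; lra.
            * rewrite length_app. destruct w. rewrite sumR_nil in Hw2. lra. simpl. lia. }
      assert (Hcb : forall n, (count s n <= B)%nat).
      { intro n. destruct (Hcl n) as [z [Hz1 [Hz2 Hz3]]].
        destruct (Req_dec (s n) 0) as [E|E].
        - assert (length z <= B)%nat by (apply HB; split; auto; lra). lia.
        - destruct (Hat (s n) (conj (HsM n) E)) as [w [Hw1 Hw2]].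
          assert (length (z ++ w) <= B)%nat.
          { apply HB. split. apply Forall_app; auto. rewrite sumR_app; lra. }
          rewrite length_app in H. lia. }
      destruct (nat_stab (count s) B) as [N HN]; auto.
      { intro n. simpl. lia. }
      exists N. intros n Hn. induction Hn. auto.
      rewrite <- IHHn. pose proof (HN (S m) (le_S _ _ Hn)). pose proof (HN m Hn).
      simpl in H. destruct (Req_EM_T (s m - s (S m)) 0). lra. lia. }
  destruct Hst as [N HN]. exists N. intros n Hn. rewrite (HN n Hn).
  split; intros m Hm; exists m; split; auto.
Qed.

Lemma M_inv a (ha:0<a) : M_alpha (/ a) = M_alpha a.
Proof.
  apply functional_extensionality; intro x. apply propositional_extensionality.
  assert (Hp : forall k, powerRZ (/ a) k = powerRZ a (- k)).
  { intro k. rewrite powerRZ_inv', powerRZ_neg'. reflexivity. }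
  assert (Hf : forall f, laurent_eval f (/ a) = laurent_eval (map (fun ck => (fst ck, (- snd ck)%Z)) f) a).
  { induction f as [|[c k] f IH]. reflexivity. simpl map. rewrite !eval_cons, IH, Hp. reflexivity. }
  split; intros [f ->].
  - exists (map (fun ck => (fst ck, (- snd ck)%Z)) f). apply Hf.
  - exists (map (fun ck => (fst ck, (- snd ck)%Z)) f). rewrite Hf, map_map. simpl.
    f_equal. rewrite <- (map_id f) at 1. apply map_ext. intros [c k]. simpl. rewrite Z.opp_involutive. reflexivity.
Qed.
Lemma powZ_lt a (ha:0<a) (ha1:a<1) i j : (i < j)%Z -> powerRZ a j < powerRZ a i.
Proof.
  intros H. replace j with (i + Z.of_nat (S (Z.to_nat (j - i - 1))))%Z by lia.
  rewrite powerRZ_add by lra. rewrite <- pow_powerRZ.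
  pose proof (powerRZ_lt a i ha).
  assert (a ^ S (Z.to_nat (j - i - 1)) < 1). { apply pow_lt_1_compat. lra. lia. }
  nra.
Qed.

Lemma powZ_le a (ha:0<a) (ha1:a<1) i j : (i <= j)%Z -> powerRZ a j <= powerRZ a i.
Proof.
  intros H. destruct (Z.eq_dec i j) as [->|Hn]. lra. left. apply powZ_lt; auto. lia.
Qed.

Lemma M_scale1 a (ha:0<a) x : M_alpha a x -> M_alpha a (a * x).
Proof. intros H. assert (E : a * x = powerRZ a 1 * x) by (simpl; ring). rewrite E. apply M_scale; auto. Qed.

Lemma lower_bound a (ha:0<a) (ha1:a<1) y : 0 < y -> exists N, forall k, powerRZ a k <= y -> (- N <= k)%Z.
Proof.
  intros Hy. destruct (pow_lt_1_zero a ltac:(rewrite Rabs_right; lra) (/ y) ltac:(apply Rinv_0_lt_compat; lra)) as [N0 HN0].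
  exists (Z.of_nat N0). intros k Hk. destruct (Z_lt_le_dec k (- Z.of_nat N0)) as [Hlt|]; auto.
  exfalso. specialize (HN0 N0 (le_n _)).
  assert (Hp : 0 < a ^ N0) by (apply pow_lt; lra).
  rewrite Rabs_right in HN0 by lra.
  pose proof (powZ_lt a ha ha1 k (- Z.of_nat N0) Hlt) as H2.
  rewrite powerRZ_neg', <- pow_powerRZ in H2.
  assert (y < / a ^ N0).
  { rewrite <- (Rinv_inv y). apply Rinv_lt_contravar; auto. apply Rmult_lt_0_compat; auto. apply Rinv_0_lt_compat; lra. }
  lra.
Qed.

Fixpoint sumpow (a : R) (l : list Z) : R := match l with [] => 0 | k :: l => powerRZ a k + sumpow a l end.

Lemma sumpow_M a l : M_alpha a (sumpow a l).
Proof. induction l; simpl. apply M_zero. apply M_add; auto. apply M_pow. Qed.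

Lemma sumpow_app a l1 l2 : sumpow a (l1 ++ l2) = sumpow a l1 + sumpow a l2.
Proof. induction l1; simpl; [ring| rewrite IHl1; ring]. Qed.

Lemma sumpow_repeat a k c : sumpow a (repeat k c) = INR c * powerRZ a k.
Proof. induction c. simpl; ring. rewrite S_INR. simpl repeat. simpl sumpow. rewrite IHc. ring. Qed.

Definition expand (f : list (nat * Z)) : list Z := flat_map (fun ck => repeat (snd ck) (fst ck)) f.

Lemma expand_eval a f : sumpow a (expand f) = laurent_eval f a.
Proof.
  induction f as [|[c k] f IH]. reflexivity.
  unfold expand in *. simpl flat_map. rewrite sumpow_app, IH, sumpow_repeat, eval_cons. reflexivity.
Qed.

Fixpoint geo (a : R) (p : Z) (n : nat) : R := match n with O => 0 | S n => powerRZ a p + geo a (p+1) n end.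

Lemma geo_M a p n : M_alpha a (geo a p n).
Proof. revert p; induction n; intro p; simpl. apply M_zero. apply M_add; auto. apply M_pow. Qed.

Lemma geo_id a (ha:0<a) p n : (1 - a) * geo a p n = powerRZ a p - powerRZ a (p + Z.of_nat n).
Proof.
  revert p; induction n; intro p; simpl geo. rewrite Z.add_0_r; ring.
  rewrite Rmult_plus_distr_l, IHn. replace (p + 1 + Z.of_nat n)%Z with (p + Z.of_nat (S n))%Z by lia.
  rewrite (powerRZ_add a p 1) by lra. replace (powerRZ a 1) with a by (simpl; ring). ring.
Qed.

Fixpoint pairsum (a : R) (P Zs : list Z) : R :=
  match P, Zs with p :: P', z :: Zs' => geo a p (Z.to_nat (z - p)) + pairsum a P' Zs' | _, _ => 0 end.

Lemma pairsum_M a P Zs : M_alpha a (pairsum a P Zs).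
Proof. revert Zs; induction P; destruct Zs; simpl; try apply M_zero. apply M_add; auto. apply geo_M. Qed.

Lemma pairsum_id a (ha:0<a) P Zs : (length P <= length Zs)%nat -> (forall p z, In p P -> In z Zs -> (p <= z)%Z) ->
  (1 - a) * pairsum a P Zs = sumpow a P - sumpow a Zs + sumpow a (skipn (length P) Zs).
Proof.
  revert Zs; induction P as [|p P IH]; intros Zs Hl Hle.
  - simpl. ring.
  - destruct Zs as [|z Zs]; simpl in Hl. lia.
    simpl pairsum. simpl sumpow. simpl length. simpl skipn.
    rewrite Rmult_plus_distr_l, (geo_id a ha), IH; [| lia | intros; apply Hle; simpl; auto].
    replace (p + Z.of_nat (Z.to_nat (z - p)))%Z with z. ring.
    assert (p <= z)%Z by (apply Hle; simpl; auto). lia.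
Qed.

Lemma sumpow_ge a (ha:0<a) (ha1:a<1) K l : Forall (fun p => (p <= K)%Z) l -> INR (length l) * powerRZ a K <= sumpow a l.
Proof. induction 1; simpl length; simpl sumpow. simpl; lra. rewrite S_INR. pose proof (powZ_le a ha ha1 x K H). lra. Qed.

Lemma sumpow_le a (ha:0<a) (ha1:a<1) K l : Forall (fun z => (K < z)%Z) l -> sumpow a l <= INR (length l) * powerRZ a (K+1).
Proof. induction 1; simpl length; simpl sumpow. simpl; lra. rewrite S_INR. pose proof (powZ_le a ha ha1 (K+1) x ltac:(lia)). lra. Qed.

Lemma lemA a (ha:0<a) (ha1:a<1) P Zs K : P <> [] -> Forall (fun p => (p <= K)%Z) P -> Forall (fun z => (K < z)%Z) Zs ->
  sumpow a P = sumpow a Zs -> ~ ACCP (M_alpha a).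
Proof.
  intros HP HPK HZK Heq.
  pose proof (sumpow_ge a ha ha1 K P HPK) as H1.
  pose proof (sumpow_le a ha ha1 K Zs HZK) as H2.
  assert (HaK : 0 < powerRZ a K) by (apply powerRZ_lt; lra).
  assert (HK1 : powerRZ a (K+1) = powerRZ a K * a) by (rewrite powerRZ_add by lra; replace (powerRZ a 1) with a by (simpl; ring); ring).
  destruct P as [|p P']; [congruence|].
  assert (Hpos : 0 < sumpow a (p :: P')).
  { simpl. pose proof (powerRZ_lt a p ha). pose proof (M_nonneg a ha _ (sumpow_M a P')). lra. }
  assert (Hlt : (length (p :: P') < length Zs)%nat).
  { apply INR_lt. destruct Zs as [|z Zs']. simpl in Heq, Hpos. lra.
    assert (0 < INR (length (z :: Zs'))) by (simpl length; rewrite S_INR; pose proof (pos_INR (length Zs')); lra).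
    apply Rmult_lt_reg_r with (powerRZ a K); auto. rewrite HK1 in H2.
    assert (0 < INR (length (z :: Zs')) * powerRZ a K) by (apply Rmult_lt_0_compat; auto).
    nra. }
  assert (Hle : forall p0 z, In p0 (p :: P') -> In z Zs -> (p0 <= z)%Z).
  { intros p0 z Hp Hz. rewrite Forall_forall in HPK, HZK. specialize (HPK p0 Hp). specialize (HZK z Hz). lia. }
  pose proof (pairsum_id a ha (p :: P') Zs ltac:(lia) Hle) as Hid. rewrite Heq in Hid.
  replace (sumpow a Zs - sumpow a Zs + sumpow a (skipn (length (p :: P')) Zs))
    with (sumpow a (skipn (length (p :: P')) Zs)) in Hid by ring.
  apply (chain_not_ACCP a ha (fun u => M_alpha a u /\ 0 < u /\ M_alpha a ((1-a)*u)) (pairsum a (p :: P') Zs)).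
  - split; [apply pairsum_M|split].
    + destruct Zs as [|z Zs']. simpl in Hlt; lia.
      simpl pairsum. assert (p <= K)%Z by (inversion HPK; auto). assert (K < z)%Z by (inversion HZK; auto).
      destruct (Z.to_nat (z - p)) eqn:E. lia. simpl geo.
      pose proof (powerRZ_lt a p ha). pose proof (M_nonneg a ha _ (geo_M a (p+1) n)).
      pose proof (M_nonneg a ha _ (pairsum_M a P' Zs')). lra.
    + rewrite Hid. apply sumpow_M.
  - intros u [Hu _]; auto.
  - intros u [Hu [Hpos' Hd]]. exists (a * u). split; [split; [apply M_scale1; auto|split]|split].
    + nra.
    + replace ((1 - a) * (a * u)) with (a * ((1 - a) * u)) by ring. apply M_scale1; auto.
    + replace (u - a * u) with ((1 - a) * u) by ring. auto.
    + nra.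
Qed.

Definition FinF (M : R -> Prop) (y : R) := exists F : list (list R), forall z, is_factorization M y z -> exists z', In z' F /\ Permutation z z'.

Lemma fact_remove a y z x : is_factorization (M_alpha a) y z -> In x z ->
  exists z0, Permutation z (x :: z0) /\ is_factorization (M_alpha a) (y - x) z0.
Proof.
  intros [Hz Hs] Hx. apply in_split in Hx. destruct Hx as [l1 [l2 ->]].
  exists (l1 ++ l2). split. apply Permutation_sym, Permutation_middle.
  apply Forall_app in Hz. destruct Hz as [Hz1 Hz2]. pose proof (Forall_inv_tail Hz2).
  split. apply Forall_app; auto.
  rewrite sumR_app in Hs |- *. rewrite sumR_cons in Hs. lra.
Qed.

Lemma cover a (ha:0<a) y (As : list R) :
  (forall x, In x As -> FinF (M_alpha a) (y - x) \/ ~ M_alpha a (y - x)) ->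
  exists F, forall z, is_factorization (M_alpha a) y z -> (exists x, In x As /\ In x z) -> exists z', In z' F /\ Permutation z z'.
Proof.
  induction As as [|x As IH]; intros H.
  - exists []. intros z _ [x [[] _]].
  - destruct IH as [F HF]. { intros x0 Hx0. apply H. simpl; auto. }
    destruct (H x (or_introl eq_refl)) as [[Fx HFx]|HnM].
    + exists (map (cons x) Fx ++ F). intros z Hz [x0 [Hx0 Hz0]].
      destruct Hx0 as [<-|Hx0].
      * destruct (fact_remove a y z x Hz Hz0) as [z0 [Hp Hf]].
        destruct (HFx z0 Hf) as [w [Hw Hpw]]. exists (x :: w). split.
        -- apply in_or_app. left. apply in_map. auto.
        -- eapply perm_trans; [exact Hp|]. apply perm_skip. auto.
      * destruct (HF z Hz (ex_intro _ x0 (conj Hx0 Hz0))) as [w [Hw Hpw]]. exists w. split; auto.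
        apply in_or_app; auto.
    + exists F. intros z Hz [x0 [Hx0 Hz0]].
      destruct Hx0 as [<-|Hx0].
      * exfalso. destruct (fact_remove a y z x Hz Hz0) as [z0 [Hp [Hf Hs]]]. apply HnM. rewrite <- Hs. apply atoms_sum_M; auto.
      * apply HF; eauto.
Qed.

Lemma FinF_zero a (ha:0<a) : FinF (M_alpha a) 0.
Proof.
  exists [[]]. intros z [Hz Hs]. exists []. split; [left; auto|].
  destruct z as [|x z']. apply Permutation_refl. exfalso.
  assert (x <= sumR (x :: z')) by (apply (in_le_sum a ha); auto; left; auto).
  inversion Hz; subst. pose proof (atom_pos a ha x H2). lra.
Qed.

Lemma bound (l : list Z) : exists K, Forall (fun p => (p <= K)%Z) l.
Proof.
  induction l as [|x l [K HK]]. exists 0%Z; auto.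
  exists (Z.max x K). constructor. lia. eapply Forall_impl; [|exact HK]. intros b Hb. simpl in Hb. lia.
Qed.

Lemma to_exps a K z : Forall (fun x => exists k, x = powerRZ a k /\ (K < k)%Z) z ->
  exists Zs, sumpow a Zs = sumR z /\ Forall (fun k => (K < k)%Z) Zs.
Proof.
  induction 1 as [|x z [k [-> Hk]] _ [Zs [H1 H2]]].
  - exists []. split; auto.
  - exists (k :: Zs). split. simpl sumpow. rewrite sumR_cons, H1. reflexivity. constructor; auto.
Qed.

Lemma T_case a (ha:0<a) (ha1:a<1) y : M_alpha a y -> 0 < y -> ~ FinF (M_alpha a) y ->
  (forall k, M_alpha a (y - powerRZ a k) -> FinF (M_alpha a) (y - powerRZ a k)) -> ~ ACCP (M_alpha a).
Proof.
  intros [f Hf] Hy Hnf Hk.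
  assert (HP : sumpow a (expand f) = y) by (rewrite expand_eval; auto).
  destruct (bound (expand f)) as [K HK].
  destruct (lower_bound a ha ha1 y Hy) as [N HN].
  set (As := map (fun i => powerRZ a (K - Z.of_nat i)) (seq 0 (Z.to_nat (K + N) + 1))).
  destruct (cover a ha y As) as [F HF].
  { intros x Hx. apply in_map_iff in Hx. destruct Hx as [i [<- _]].
    destruct (classic (M_alpha a (y - powerRZ a (K - Z.of_nat i)))); [left; apply Hk; auto | right; auto]. }
  assert (Hz : exists z, is_factorization (M_alpha a) y z /\ ~ exists z', In z' F /\ Permutation z z').
  { apply NNPP; intro Hn. apply Hnf. exists F. intros z Hz. apply NNPP. intro. apply Hn. eauto. }
  destruct Hz as [z [Hz Hnc]].
  assert (Hsmall : Forall (fun x => exists k, x = powerRZ a k /\ (K < k)%Z) z).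
  { apply Forall_forall. intros x Hx.
    pose proof Hz as [Hza Hzs]. pose proof Hza as Hza'. rewrite Forall_forall in Hza.
    destruct (atom_form a ha x (Hza x Hx)) as [k ->]. exists k. split; auto.
    destruct (Z_lt_le_dec K k); auto. exfalso. apply Hnc. apply HF; auto. exists (powerRZ a k). split; auto.
    assert (Hky : powerRZ a k <= y) by (rewrite <- Hzs; apply (in_le_sum a ha); auto).
    specialize (HN k Hky). apply in_map_iff. exists (Z.to_nat (K - k)). split.
    - f_equal. lia.
    - apply in_seq. lia. }
  destruct (to_exps a K z Hsmall) as [Zs [HZs1 HZs2]].
  apply (lemA a ha ha1 (expand f) Zs K); auto.
  - intro E. rewrite E in HP. simpl in HP. lra.
  - rewrite HP, HZs1. destruct Hz; auto.
Qed.

Lemma key_lt1 a (ha:0<a) (ha1:a<1) : ACCP (M_alpha a) -> FFM (M_alpha a).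
Proof.
  intros Hacc. pose proof (one_atom a ha Hacc) as H1.
  split; [apply atomic_M; auto|].
  intros x [Hx Hx0]. apply NNPP. intros Hnf.
  apply (chain_not_ACCP a ha (fun y => M_alpha a y /\ ~ FinF (M_alpha a) y) x); auto.
  - intros y [Hy _]; auto.
  - intros y [Hy Hny].
    assert (Hy0 : 0 < y).
    { pose proof (M_nonneg a ha y Hy). destruct (Req_dec y 0) as [->|]; [|lra]. exfalso. apply Hny. apply FinF_zero; auto. }
    destruct (classic (exists k, M_alpha a (y - powerRZ a k) /\ ~ FinF (M_alpha a) (y - powerRZ a k))) as [[k [Hk1 Hk2]]|Hno].
    + exists (y - powerRZ a k). split; [split; auto|split].
      * replace (y - (y - powerRZ a k)) with (powerRZ a k) by ring. apply M_pow.
      * pose proof (powerRZ_lt a k ha). lra.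
    + exfalso. apply (T_case a ha ha1 y Hy Hy0 Hny); auto.
      intros k Hk. apply NNPP. intro. apply Hno. eauto.
Qed.

Lemma ones l : Forall (is_atom (M_alpha 1)) l -> l = repeat 1 (length l).
Proof.
  induction 1. reflexivity. simpl. f_equal; auto.
  destruct (atom_form 1 Rlt_0_1 x H) as [k ->]. apply powerRZ_R1.
Qed.

Lemma key_eq1 : ACCP (M_alpha 1) -> FFM (M_alpha 1).
Proof.
  intros Hacc. pose proof (one_atom 1 Rlt_0_1 Hacc) as H1.
  assert (Hat := atomic_M 1 Rlt_0_1 H1). split; auto.
  intros x Hx. destruct (Hat x Hx) as [z0 Hz0]. exists [z0].
  intros z Hz. exists z0. split; [left; auto|].
  assert (Hones : forall w, is_factorization (M_alpha 1) x w -> w = repeat 1 (length w) /\ INR (length w) = x).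
  { intros w [Hw Hs]. pose proof (ones w Hw) as E.
    split; auto. rewrite <- Hs, E, sumR_repeat, repeat_length. ring. }
  destruct (Hones z Hz) as [E1 L1]. destruct (Hones z0 Hz0) as [E2 L2].
  rewrite E1, E2. assert (length z = length z0) by (apply INR_eq; lra). rewrite H. apply Permutation_refl.
Qed.

Lemma key a (ha:0<a) : ACCP (M_alpha a) -> FFM (M_alpha a).
Proof.
  destruct (Rlt_le_dec a 1) as [H|H].
  - apply key_lt1; auto.
  - destruct (Req_dec a 1) as [->|Hne]. apply key_eq1.
    rewrite <- (M_inv a ha). apply key_lt1. apply Rinv_0_lt_compat; lra.
    rewrite <- Rinv_1. apply Rinv_lt_contravar; lra.
Qed.

Theorem theorem4p3 (alpha : R) (halpha : 0 < alpha) :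
  (FFM (M_alpha alpha) <-> BFM (M_alpha alpha)) /\
  (BFM (M_alpha alpha) <-> ACCP (M_alpha alpha)).
Proof.
  split; split; intro H.
  - apply FFM_BFM; auto.
  - apply key; auto. apply BFM_ACCP; auto.
  - apply BFM_ACCP; auto.
  - apply FFM_BFM, key; auto.
Qed.
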